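(* There is an absolute constant $\epsilon_0>0$ such that every nonadaptive, $1$-sided error unateness tester for functions $f:\{0,1\}^d\to\{0,1\}$ with proximity parameter $\epsilon_0$ must make $\Omega(\sqrt d)$ queries.
   Context: A function $f:\{0,1\}^d\to\mathbb{R}$ is unate if each dimension $i\in[d]$ can be assigned a direction up or down such that: if up, $f(x)\le f(x+e_i)$ for all $x$ with $x_i=0$ (here $x+e_i$ is $x$ with the $i$-th bit set to 1); if down, $f(x)\ge f(x+e_i)$ for all such $x$. The distance between two functions is the fraction of points where they differ; $f$ is $\epsilon$-far from unate if its distance to every unate function is at least $\epsilon$. A unateness tester is a randomized algorithm that, given $\epsilon$ and oracle (query) access to $f$, accepts with probability at least $2/3$ if $f$ is unate and rejects with probability at least $2/3$ if $f$ is $\epsilon$-far from unate. It is nonadaptive if it chooses all its queries before seeing any answers, and has $1$-sided error if it accepts every unate function with probability $1$. *)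

(* Defs.v *)
From HB Require Import structures.
From mathcomp Require Import all_boot all_order all_algebra.
Set Implicit Arguments. Unset Strict Implicit. Unset Printing Implicit Defensive.
Import Order.TTheory GRing.Theory Num.Theory.

Definition cube (d : nat) := {ffun 'I_d -> bool}.

Definition setbit (d : nat) (x : cube d) (i : 'I_d) : cube d :=
  [ffun j => if j == i then true else x j].

Definition unate (d : nat) (f : cube d -> bool) : Prop :=
  exists dir : 'I_d -> bool,
    forall (i : 'I_d) (x : cube d), x i = false ->
      if dir i then (f x ==> f (setbit x i))
      else (f (setbit x i) ==> f x).

Definition dist (d : nat) (f g : cube d -> bool) : rat :=
  (#|[set x : cube d | f x != g x]|%:R / (2 ^ d)%:R)%R.

Definition far_from_unate (d : nat) (eps : rat) (f : cube d -> bool) : Prop :=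
  forall g : cube d -> bool, unate g -> (eps <= dist f g)%R.

(* A nonadaptive randomized tester with at most q queries, given as a
   probability distribution p (weights in an ordered field R) over a finite
   set Omega of random seeds; seed w fixes the query list Q w (chosen before
   any answer is seen) and a decision D w applied to the answers. *)
Definition accept_prob (R : realFieldType) (d : nat) (Omega : finType)
  (p : Omega -> R) (Q : Omega -> seq (cube d)) (D : Omega -> seq bool -> bool)
  (f : cube d -> bool) : R :=
  (\sum_(w : Omega | D w (map f (Q w))) p w)%R.

Definition is_distribution (R : realFieldType) (Omega : finType) (p : Omega -> R) :=
  (forall w, 0 <= p w)%R /\ (\sum_(w : Omega) p w = 1)%R.

Definition nonadaptive_1sided_unateness_tester (R : realFieldType) (d : nat)
  (eps : rat) (q : nat) (Omega : finType) (p : Omega -> R)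
  (Q : Omega -> seq (cube d)) (D : Omega -> seq bool -> bool) : Prop :=
  [/\ is_distribution p,
      (forall w, size (Q w) <= q)%N,
      (forall f, unate f -> accept_prob p Q D f = 1%R) &
      (forall f, far_from_unate eps f -> (accept_prob p Q D f <= 1 / 3)%R)].

(* Main.v *)
Require Import Defs.
From HB Require Import structures.
From mathcomp Require Import all_boot all_order all_algebra.
From mathcomp Require Import ring lra.
Import Order.TTheory GRing.Theory Num.Theory.
Set Implicit Arguments. Unset Strict Implicit. Unset Printing Implicit Defensive.

Definition o1 {n} : 'I_n.+3 := inord 1.
Definition o2 {n} : 'I_n.+3 := inord 2.
Definition ca {n} (i : 'I_n.+3) : 'I_n.+3 := if i == ord0 then o1 else ord0.
Definition cb {n} (i : 'I_n.+3) : 'I_n.+3 := if i == o2 then o1 else o2.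

Lemma o_vals n : (val (@o1 n) = 1%N) /\ (val (@o2 n) = 2%N).
Proof. by split; apply: inordK. Qed.

Lemma ca_neq n (i : 'I_n.+3) : (ca i != i) && (cb i != i) && (ca i != cb i).
Proof.
have [h1 h2] := o_vals n.
case: i => [[|[|[|k]]] Hi]; rewrite /ca /cb -!val_eqE /= !(fun_if val) /= ?h1 ?h2 //.
Qed.

Definition fi {n} (i : 'I_n.+3) (x : cube n.+3) : bool :=
  if x i then x (ca i) else x (cb i).
Definition upd {d} (x : cube d) (j : 'I_d) (v : bool) : cube d :=
  [ffun k => if k == j then v else x k].

Lemma updE d (x : cube d) j v k : upd x j v k = if k == j then v else x k.
Proof. by rewrite ffunE. Qed.

Lemma card_cube d : #|[set: cube d]| = (2 ^ d)%N.
Proof. by rewrite cardsT card_ffun card_bool card_ord. Qed.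

Lemma fi_far n (i : 'I_n.+3) (g : cube n.+3 -> bool) :
  unate g -> (1/8 <= dist (fi i) g)%R.
Proof.
case=> dir Hdir.
have /andP[/andP[ai bi] ab] := ca_neq i.
have ai' := negbTE ai; have bi' := negbTE bi; have ab' := negbTE ab.
have ia : (i == ca i) = false by rewrite eq_sym.
have ib : (i == cb i) = false by rewrite eq_sym.
have ba : (cb i == ca i) = false by rewrite eq_sym.
set s := dir i.
set Dset := [set x | fi i x != g x].
pose yy (x : cube n.+3) := upd (upd x (ca i) (~~ s)) (cb i) s.
pose h (x : cube n.+3) := if fi i (upd (yy x) i false) != g (upd (yy x) i false)
   then upd (yy x) i false else upd (yy x) i true.
have hD : forall x, h x \in Dset.
  move=> x; rewrite /h; case: ifP => [|/negbFE/eqP E]; first by rewrite inE.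
  rewrite inE.
  have Hs : setbit (upd (yy x) i false) i = upd (yy x) i true.
    by apply/ffunP => k; rewrite !ffunE; case: (k == i).
  have := Hdir i (upd (yy x) i false).
  rewrite ffunE eqxx Hs => /(_ erefl).
  have f0 : fi i (upd (yy x) i false) = s.
    by rewrite /fi /yy /upd !ffunE !eqxx ?ai' ?bi' ?ab' ?ia ?ib ?ba.
  have f1 : fi i (upd (yy x) i true) = ~~ s.
    by rewrite /fi /yy /upd !ffunE !eqxx ?ai' ?bi' ?ab' ?ia ?ib ?ba.
  rewrite f1 -E f0.
  rewrite -/s; by case: (s); case: (g (upd (yy x) i true)).
pose F (p : cube n.+3 * (bool * bool * bool)) :=
  upd (upd (upd p.1 (ca i) p.2.1.1) (cb i) p.2.1.2) i p.2.2.
have HF : forall x, x = F (h x, (x (ca i), x (cb i), x i)).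
  move=> x; apply/ffunP => k; rewrite /F /h /yy /upd /=.
  case: ifP => _; rewrite !ffunE;
    case: (k =P i) => [->//|_]; case: (k =P cb i) => [->//|_];
    by case: (k =P ca i) => [->//|_].
have Hle : (2 ^ n.+3 <= #|Dset| * 8)%N.
  rewrite -card_cube.
  have -> : (#|Dset| * 8 = #|setX Dset [set: bool * bool * bool]|)%N.
    by rewrite cardsX cardsT !card_prod card_bool.
  apply: (leq_trans _ (leq_imset_card F _)).
  apply: subset_leq_card; apply/subsetP => x _.
  apply/imsetP; exists (h x, (x (ca i), x (cb i), x i)); last exact: HF.
  by rewrite in_setX hD in_setT.
rewrite /dist -/Dset ler_pdivlMr ?ltr0n ?expn_gt0 //.
have : ((2 ^ n.+3)%:R <= (#|Dset| * 8)%:R :> rat)%R by rewrite ler_nat.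
rewrite natrM. lra.
Qed.

Definition bad {d} (x y : cube d) (i : 'I_d) :=
  [&& x i, ~~ y i & [forall j, (j != i) ==> (x j ==> y j)]].
Definition leI {d} (i : 'I_d) (x y : cube d) :=
  [forall j, if j != i then x j ==> y j else y j ==> x j].
Definition gext {n} (i : 'I_n.+3) (S : seq (cube n.+3)) (z : cube n.+3) :=
  has (fun x => leI i x z && fi i x) S.

Lemma gext_unate n (i : 'I_n.+3) S : unate (gext i S).
Proof.
exists (fun j => j != i) => j z hz /=.
case: ifP => hj; apply/implyP => /hasP [x xS /andP [le fx]];
  apply/hasP; exists x => //; rewrite fx andbT; apply/forallP => k;
  move/forallP: le => /(_ k); rewrite /setbit ffunE.
- case: (k =P j) => [->|_] //; by rewrite hj implybT.
- case: (k =P j) => [->|_] //; move/negbFE: hj => /eqP ->; rewrite eqxx /= => ->; by rewrite implybT.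
Qed.

Lemma gext_agree n (i : 'I_n.+3) S :
  (forall x y, x \in S -> y \in S -> ~~ bad x y i) ->
  map (gext i S) S = map (fi i) S.
Proof.
move=> Hb; apply/eq_in_map => y yS.
have /andP[/andP[ai bi] ab] := ca_neq i.
apply/idP/idP.
- case/hasP => x xS /andP [le fx].
  have Hl := forallP le.
  have := Hb x y xS yS; rewrite /bad.
  move: fx (Hl i) (Hl (ca i)) (Hl (cb i)); rewrite /fi eqxx ai bi /=.
  case: (x i); case: (y i) => //=.
  + by move=> h _ /implyP /(_ h).
  + move=> _ _ _ _ /negP; case; apply/forallP => j.
    apply/implyP => ji; move: (Hl j); by rewrite ji.
  + by move=> h _ _ /implyP /(_ h).
- move=> fy; apply/hasP; exists y => //; rewrite fy andbT.
  by apply/forallP => k; case: ifP; rewrite implybb.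
Qed.

Lemma card_bad d (i0 : 'I_d) (S : seq (cube d)) :
  (#|[set i | [exists x : cube d, exists y : cube d,
       [&& x \in S, y \in S & bad x y i]]]| <= size S * size S)%N.
Proof.
pose s := [seq odflt i0 [pick j | x j && ~~ y j] | x : cube d <- S, y : cube d <- S].
rewrite -(size_allpairs (fun (x y : cube d) => odflt i0 [pick j | x j && ~~ y j])).
apply: (leq_trans _ (card_size s)).
apply: subset_leq_card; apply/subsetP => i; rewrite inE.
case/existsP => x /existsP [y /and3P [xS yS /and3P [xi yi /forallP Hf]]].
apply/allpairsP; exists (x, y); split => //=.
case: pickP => [j /andP [xj yj] | H] /=.
- apply/eqP; apply/negPn/negP => ij.
  by move: (Hf j); rewrite eq_sym ij xj (negbTE yj).
- by move: (H i); rewrite xi yi.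
Qed.

Theorem theorem13 :
  exists (eps0 : rat) (c : rat) (d0 : nat),
    (0 < eps0)%R /\ (0 < c)%R /\
    forall (d : nat), (d0 <= d)%N ->
    forall (R : realFieldType) (q : nat) (Omega : finType) (p : Omega -> R)
           (Q : Omega -> seq (cube d)) (D : Omega -> seq bool -> bool),
      nonadaptive_1sided_unateness_tester eps0 q p Q D ->
      (c * d%:R <= (q ^ 2)%:R)%R.
Proof.
exists (1/8)%R, (2/3)%R, 3%N; split; first by rewrite divr_gt0.
split; first by rewrite divr_gt0.
case=> [|[|[|n]]] // _ R q Omega p Q D [[p0 p1] Hsize Hun Hfar].
have acc1 : forall g, unate g -> forall w, p w != 0%R -> D w (map g (Q w)).
  move=> g /Hun; rewrite /accept_prob => H w pw; apply/negPn/negP => nD.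
  have E0 : (\sum_(w | ~~ D w (map g (Q w))) p w = 0)%R.
    move: p1; rewrite (bigID (fun w => D w (map g (Q w)))) /= H => E.
    by apply: (addrI 1%R); rewrite E addr0.
  by move: (psumr_eq0P (fun w _ => p0 w) E0 nD) => /eqP; rewrite (negbTE pw).
pose Bset w := [set i | [exists x : cube n.+3, exists y : cube n.+3,
       [&& x \in Q w, y \in Q w & bad x y i]]].
have rej : forall i w, p w != 0%R -> ~~ D w (map (fi i) (Q w)) -> i \in Bset w.
  move=> i w pw nD; apply/idPn => /negP nb.
  have Hb : forall x y, x \in Q w -> y \in Q w -> ~~ bad x y i.
    move=> x y xS yS; apply/negP => b; apply: nb; rewrite inE.
    by apply/existsP; exists x; apply/existsP; exists y; rewrite xS yS b.
  by move: nD; rewrite -(gext_agree Hb) acc1 //; apply: gext_unate.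
have lower : forall i : 'I_n.+3,
    (2/3 <= \sum_(w | ~~ D w (map (fi i) (Q w))) p w)%R.
  move=> i.
  have := Hfar (fi i) (fun g ug => fi_far i ug); rewrite /accept_prob.
  move: p1; rewrite (bigID (fun w => D w (map (fi i) (Q w)))) /=.
  lra.
have upper : forall w,
    (\sum_(i | ~~ D w (map (fi i) (Q w))) p w <= p w *+ (q ^ 2))%R.
  move=> w; rewrite sumr_const.
  case: (p w =P 0%R) => [->|/eqP pw]; first by rewrite !mul0rn.
  apply: (ler_wpMn2l (p0 w)).
  apply: (@leq_trans #|Bset w|).
    by apply: subset_leq_card; apply/subsetP => i; exact: (rej i w pw).
  apply: (leq_trans (card_bad ord0 (Q w))).
  by rewrite -mulnn leq_mul.
have key : ((n.+3)%:R * (2/3) <= (q ^ 2)%:R :> R)%R.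
  have -> : ((n.+3)%:R * (2/3) = \sum_(i : 'I_n.+3) (2/3) :> R)%R.
    by rewrite sumr_const card_ord mulr_natl.
  apply: (le_trans (ler_sum _ (fun i _ => lower i))).
  rewrite (exchange_big_dep predT) //=.
  apply: (le_trans (ler_sum _ (fun w _ => upper w))).
  by rewrite sumrMnl p1.
have knat : (2 * n.+3 <= 3 * q ^ 2)%N.
  rewrite -(ler_nat R) !natrM; move: key; lra.
move: knat; rewrite -(ler_nat rat) !natrM; lra.
Qed.
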